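(* Let $W$ be a weak $V$-module, $z$ a nonzero complex number and $\alpha\in W^*$. The following are equivalent: (a) $\alpha\in\mathcal D_{P(z)}(W)$; (b) for each $v\in V$ there exist $l,k\in\mathbb N$ such that for every $w\in W$, $x^l(x-z)^k\langle\alpha,Y^o(v,x)w\rangle$ is a polynomial in $x$; (c) for each $v\in V$ there exist $l,k\in\mathbb N$ such that $x^l(x-z)^kY^*(v,x)\alpha\in W^*[[x]]$; (d) for each $v\in V$ there exists $k\in\mathbb N$ such that $(x-z)^kY^*(v,x)\alpha\in W^*((x))$.
   Context: $V$ is a vertex operator algebra with vacuum $\mathbf 1$, Virasoro element $\omega$, $Y(\omega,x)=\sum_{n}L(n)x^{-n-2}$, and $V=\coprod_{n\in\mathbb Z}V_{(n)}$ graded by $L(0)$-eigenvalues. The formal delta function is $\delta(x)=\sum_{n\in\mathbb Z}x^n$; binomial expressions $(x_1-x_2)^n$ are expanded in nonnegative powers of the second variable. A weak $V$-module is a vector space $W$ with a linear map $Y_W:V\to(\mathrm{End}\,W)[[x,x^{-1}]]$ such that $Y_W(v,x)w\in W((x))$, $Y_W(\mathbf 1,x)=\mathrm{id}_W$, and the Jacobi identity $x_0^{-1}\delta(\frac{x_1-x_2}{x_0})Y_W(u,x_1)Y_W(v,x_2)-x_0^{-1}\delta(\frac{x_2-x_1}{-x_0})Y_W(v,x_2)Y_W(u,x_1)=x_2^{-1}\delta(\frac{x_1-x_0}{x_2})Y_W(Y(u,x_0)v,x_2)$ holds. For $v\in V$ set $Y^o(v,x)=Y_W(e^{xL(1)}(-x^{-2})^{L(0)}v,x^{-1})$;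 then $Y^o(v,x)w\in W((x^{-1}))$. For $\alpha\in W^*$ define $Y^*(v,x)\alpha=\sum_{n\in\mathbb Z}v^*_n\alpha\,x^{-n-1}\in W^*[[x,x^{-1}]]$ by $\langle Y^*(v,x)\alpha,w\rangle=\langle\alpha,Y^o(v,x)w\rangle$ for $w\in W$. For a nonzero complex number $z$, $\alpha\in W^*$ is a $P(z)$-linear functional if for all $v\in V,w\in W$ the series $\langle\alpha,Y^o(v,x)w\rangle$ converges absolutely in $|x|>|z|$ to a rational function in $\mathbb C[x,x^{-1},(x-z)^{-1}]$, and for each fixed $v$ the orders of the poles at $0$ and at $z$ of these rational functions are bounded independently of $w$. $\mathcal D_{P(z)}(W)$ is the space of $P(z)$-linear functionals on $W$. *)

(* Defs.v *)
From HB Require Import structures.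
From mathcomp Require Import all_boot all_order all_algebra.
From mathcomp Require Import complex.
From mathcomp Require Import boolp classical_sets fsbigop reals.

Set Implicit Arguments.
Unset Strict Implicit.
Unset Printing Implicit Defensive.

Import Order.TTheory GRing.Theory Num.Theory.
Local Open Scope ring_scope.
Local Open Scope classical_set_scope.
Local Open Scope complex_scope.

Section VOA.
Variable C : fieldType.

(* A vertex operator on M indexed by V: Y u n w = u_n w, i.e. the coefficient
   of x^{-n-1} in Y(u,x)w. *)
Definition vop (V M : lmodType C) := V -> int -> M -> M.

Definition binz (m : int) (i : nat) : C :=
  (\prod_(j < i) (m - (j : int))%:~R) / (i`!)%:R.

Definition bilinear_vop (V M : lmodType C) (Y : vop V M) :=
  forall n : int,
    (forall (a : C) (u1 u2 : V) (w : M), Y (a *: u1 + u2) n w = a *: Y u1 n w + Y u2 n w)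
 /\ (forall (u : V) (a : C) (w1 w2 : M), Y u n (a *: w1 + w2) = a *: Y u n w1 + Y u n w2).

(* Y(u,x)w \in M((x)) *)
Definition truncated_vop (V M : lmodType C) (Y : vop V M) :=
  forall (u : V) (w : M), exists N : int, forall n : int, N <= n -> Y u n w = 0.

(* The Jacobi identity, written coefficientwise: the coefficient of
   x0^{-l-1} x1^{-m-1} x2^{-n-1} of the three terms.  The sums over i are
   finitely supported (by truncation); \sum_(i \in [set: nat]) is the
   finitely-supported sum of fsbigop. *)
Definition jacobi_id (V M : lmodType C) (Y : vop V V) (YM : vop V M) :=
  forall (u v : V) (w : M) (l m n : int),
    \sum_(i \in [set: nat]) (binz m i *: YM (Y u (l + i%:Z) v) (m + n - i%:Z) w)
  = \sum_(i \in [set: nat])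
       (((-1) ^+ i * binz l i) *:
         (YM u (m + l - i%:Z) (YM v (n + i%:Z) w)
          - (-1) ^ l *: YM v (n + l - i%:Z) (YM u (m + i%:Z) w))).

(* Grading V = coprod_{n in Z} V_(n), given by the projections pi n onto V_(n);
   V_(n) is the L(0)-eigenspace of eigenvalue n (L(0) = omega_1). *)
Definition is_grading (V : lmodType C) (L0 : V -> V) (pi : int -> V -> V) :=
  [/\ (forall n : int, forall (a : C) (v1 v2 : V), pi n (a *: v1 + v2) = a *: pi n v1 + pi n v2),
      (forall (m n : int) (v : V), pi m (pi n v) = if m == n then pi n v else 0),
      (forall v : V, exists N : nat, (forall n : int, (N < `|n|)%N -> pi n v = 0)
                                    /\ v = \sum_(n \in [set: int]) pi n v) &
      (forall (n : int) (v : V), L0 (pi n v) = n%:~R *: pi n v)].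

Definition is_VOA (V : lmodType C) (Y : vop V V) (vac om : V)
    (pi : int -> V -> V) :=
  [/\ bilinear_vop Y /\ truncated_vop Y,
      (forall (n : int) (v : V), Y vac n v = if n == -1 then v else 0)
      /\ (forall (v : V) (n : int), 0 <= n -> Y v n vac = 0)
      /\ (forall v, Y v (-1) vac = v),
      jacobi_id Y Y,
      (* Virasoro relations, L(n) = omega_{n+1}, with some central charge c,
         and the L(-1)-derivative property Y(L(-1)u,x) = d/dx Y(u,x) *)
      (exists c : C, forall (m n : int) (v : V),
         Y om (m + 1) (Y om (n + 1) v) - Y om (n + 1) (Y om (m + 1) v)
         = (m - n)%:~R *: Y om (m + n + 1) v
           + (if m + n == 0 then (m ^+ 3 - m)%:~R / 12%:R * c else 0) *: v)
      /\ (forall (u : V) (n : int) (v : V), Y (Y om 0 u) n v = - n%:~R *: Y u (n - 1) v) &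
      [/\ is_grading (Y om 1) pi /\ pi 2 om = om,
          (forall n : int, exists s : seq V, forall v : V,
              exists c : nat -> C, pi n v = \sum_(i < size s) c i *: s`_i) &
          (exists N : int, forall (n : int) (v : V), n < N -> pi n v = 0)]].

Definition is_weak_module (V : lmodType C) (Y : vop V V) (vac : V)
    (W : lmodType C) (YW : vop V W) :=
  [/\ bilinear_vop YW, truncated_vop YW,
      (forall (n : int) (w : W), YW vac n w = if n == -1 then w else 0) &
      jacobi_id Y YW].

(* Coefficients of Y^o(v,x) = Y_W(e^{xL(1)}(-x^{-2})^{L(0)} v, x^{-1})
   = sum_k v^o_k x^{-k-1}, with L(1) = omega_2:
   v^o_k = sum_n (-1)^n sum_j 1/j! ((L(1)^j pi_n v)_{2n-k-2-j}). *)
Definition Yo_coef (V : lmodType C) (Y : vop V V) (om : V) (pi : int -> V -> V)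
    (W : lmodType C) (YW : vop V W) (v : V) (k : int) (w : W) : W :=
  \sum_(n \in [set: int]) \sum_(j \in [set: nat])
     (((-1) ^ n / (j`!)%:R) *: YW (iter j (Y om 2) (pi n v)) (2 * n - k - 2 - j%:Z) w).

(* coefficient of x^p in <alpha, Y^o(v,x) w> *)
Definition Yo_pair (V : lmodType C) (Y : vop V V) (om : V) (pi : int -> V -> V)
    (W : lmodType C) (YW : vop V W) (alpha : W -> C) (v : V) (w : W) : int -> C :=
  fun p => alpha (Yo_coef Y om pi YW v (- p - 1) w).

(* coefficient of x^p in Y^*(v,x) alpha, an element of W^* :
   <Y^*(v,x)alpha, w> = <alpha, Y^o(v,x) w> *)
Definition Ystar (V : lmodType C) (Y : vop V V) (om : V) (pi : int -> V -> V)
    (W : lmodType C) (YW : vop V W) (v : V) (alpha : W -> C) : int -> (W -> C) :=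
  fun p w => alpha (Yo_coef Y om pi YW v (- p - 1) w).

Definition pmul_ser (q : {poly C}) (f : int -> C) : int -> C :=
  fun p => \sum_(i < size q) q`_i * f (p - i%:Z).

Definition pmul_dser (W : lmodType C) (q : {poly C}) (F : int -> (W -> C)) : int -> (W -> C) :=
  fun p w => \sum_(i < size q) q`_i * F (p - i%:Z) w.

Definition lin_functional (W : lmodType C) (alpha : W -> C) :=
  forall (a : C) (w1 w2 : W), alpha (a *: w1 + w2) = a * alpha w1 + alpha w2.

End VOA.

Section Analytic.
Variable R : realType.
Local Notation C := (R[i]).

Definition symsum (g : int -> C) (N : nat) : C :=
  \sum_(i < (N + N).+1) g (i%:Z - N%:Z).

Definition abs_conv_to (a : int -> C) (x s : C) :=
  (exists B : C, forall N : nat, symsum (fun p => `|a p * x ^ p|) N <= B)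
  /\ (forall e : C, 0 < e -> exists N0 : nat, forall N : nat, (N0 <= N)%N ->
        `|symsum (fun p => a p * x ^ p) N - s| < e).

Definition rat_fun_0z (z : C) (f : C -> C) :=
  exists (q : {poly C}) (a b : nat), forall x : C, x != 0 -> x != z ->
    f x = q.[x] / (x ^+ a * (x - z) ^+ b).

Definition pole0_le (z : C) (f : C -> C) (m : nat) :=
  exists (q : {poly C}) (b : nat), forall x : C, x != 0 -> x != z ->
    f x = q.[x] / (x ^+ m * (x - z) ^+ b).

Definition polez_le (z : C) (f : C -> C) (m : nat) :=
  exists (q : {poly C}) (a : nat), forall x : C, x != 0 -> x != z ->
    f x = q.[x] / (x ^+ a * (x - z) ^+ m).

Definition Pz_linear (V : lmodType C) (Y : vop V V) (om : V) (pi : int -> V -> V)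
    (W : lmodType C) (YW : vop V W) (z : C) (alpha : W -> C) :=
  forall v : V, exists L K : nat, forall w : W, exists f : C -> C,
    (forall x : C, `|z| < `|x| -> abs_conv_to (Yo_pair Y om pi YW alpha v w) x (f x))
    /\ rat_fun_0z z f /\ pole0_le z f L /\ polez_le z f K.

End Analytic.

(* Main.v *)
Require Import Defs.
From HB Require Import structures.
From mathcomp Require Import all_boot all_order all_algebra.
From mathcomp Require Import complex.
From mathcomp Require Import boolp classical_sets fsbigop reals.
From mathcomp Require Import zify ring lra.
Import Order.TTheory GRing.Theory Num.Theory.
Local Open Scope ring_scope.
Local Open Scope complex_scope.
Set Implicit Arguments.
Unset Strict Implicit.
Unset Printing Implicit Defensive.
Section PMul.
Variable C : fieldType.
Implicit Types (q : {poly C}) (f : int -> C).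

Lemma pmul_widen q f p n : (size q <= n)%N ->
  pmul_ser q f p = \sum_(i < n) q`_i * f (p - i%:Z).
Proof.
move=> hn; rewrite /pmul_ser (big_ord_widen n (fun i => q`_i * f (p - i%:Z)) hn).
rewrite big_mkcond /=; apply: eq_bigr => i _; case: ifP => // /negbT.
by rewrite -leqNgt => /leq_sizeP ->; rewrite ?mul0r.
Qed.

Lemma pmulD q1 q2 f p : pmul_ser (q1 + q2) f p = pmul_ser q1 f p + pmul_ser q2 f p.
Proof.
set n := maxn (size q1) (size q2).
rewrite !(@pmul_widen _ _ _ n) ?leq_maxl ?leq_maxr //; last first.
  by apply: leq_trans (size_polyD _ _) _.
by rewrite -big_split /=; apply: eq_bigr => i _; rewrite coefD mulrDl.
Qed.

Lemma pmulZ c q f p : pmul_ser (c *: q) f p = c * pmul_ser q f p.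
Proof.
rewrite !(@pmul_widen _ _ _ (size q)) ?size_scale_leq //.
by rewrite mulr_sumr; apply: eq_bigr => i _; rewrite coefZ mulrA.
Qed.

Lemma pmulC c f p : pmul_ser c%:P f p = c * f p.
Proof.
rewrite (@pmul_widen _ _ _ 1) ?size_polyC ?leq_b1 // big_ord1 coefC /=.
by rewrite subr0.
Qed.

Lemma pmulMX q f p : pmul_ser (q * 'X) f p = pmul_ser q f (p - 1).
Proof.
rewrite (@pmul_widen _ _ _ (size q).+1); last first.
  have [->|nz] := eqVneq q 0; first by rewrite mul0r size_poly0.
  by rewrite size_mulX.
rewrite big_ord_recl coefMX /= mul0r add0r /pmul_ser; apply: eq_bigr => i _.
rewrite coefMX /= /bump /=; congr (_ * f _); lia.
Qed.
Lemma pmul0 f p : pmul_ser 0 f p = 0.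
Proof. by rewrite /pmul_ser size_poly0 big_ord0. Qed.

Lemma pmul_mul q1 q2 f p : pmul_ser (q1 * q2) f p = pmul_ser q1 (pmul_ser q2 f) p.
Proof.
elim/poly_ind: q1 p => [|q c IH] p; first by rewrite mul0r !pmul0.
rewrite mulrDl mulrAC pmulD pmulMX IH mul_polyC pmulZ.
by rewrite pmulD pmulMX pmulC.
Qed.

Lemma pmulXn n f p : pmul_ser ('X^n) f p = f (p - n%:Z).
Proof.
elim: n p => [|n IH] p; first by rewrite expr0 -polyC1 pmulC mul1r subr0.
rewrite exprSr pmulMX IH; congr f; lia.
Qed.

Lemma pmulXsubC c f p : pmul_ser ('X - c%:P) f p = f (p - 1) - c * f p.
Proof.
rewrite -polyCN -['X]mul1r pmulD pmulMX -polyC1 !pmulC mul1r mulNr.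
by [].
Qed.

Definition ub (f : int -> C) (P : nat) := forall p : int, P%:Z < p -> f p = 0.

Lemma ub_pmul q f P : ub f P -> ub (pmul_ser q f) (P + size q).
Proof.
move=> h p hp; rewrite /pmul_ser big1 // => i _; rewrite h ?mulr0 //.
have := ltn_ord i; lia.
Qed.

Lemma ub_mono f P P' : (P <= P')%N -> ub f P -> ub f P'.
Proof. by move=> le h p hp; apply: h; lia. Qed.
End PMul.
Section An.
Variable R : realType.
Local Notation C := R[i].

Definition nc (x : C) : R := Normc.normc x.

Lemma ncE (x : C) : `|x| = (nc x)%:C. Proof. by []. Qed.

Lemma nc_ge0 x : 0 <= nc x.
Proof. by rewrite -ler0c -ncE normr_ge0. Qed.

Lemma ncM x y : nc (x * y) = nc x * nc y.
Proof. by apply: (@complexI R); rewrite rmorphM /= -!ncE normrM. Qed.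

Lemma ncX x n : nc (x ^+ n) = nc x ^+ n.
Proof. by apply: (@complexI R); rewrite rmorphXn /= -!ncE normrX. Qed.


Lemma ncD x y : nc (x + y) <= nc x + nc y.
Proof. by rewrite -lecR rmorphD /= -!ncE ler_normD. Qed.

Lemma ncN x : nc (- x) = nc x.
Proof. by apply: (@complexI R); rewrite -!ncE normrN. Qed.

Lemma ncB x y : nc (x - y) = nc (y - x).
Proof. by rewrite -ncN opprB. Qed.

Lemma nc_eq0 x : (nc x == 0) = (x == 0).
Proof. by rewrite -[RHS]normr_eq0 ncE -[0 : C]/(0%:C) (inj_eq (@complexI R)). Qed.

Lemma nc_gt0 x : (0 < nc x) = (x != 0).
Proof. by rewrite lt_def nc_eq0 nc_ge0 andbT. Qed.

Lemma nc_real (r : R) : nc (r%:C) = `|r|.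
Proof. by apply: (@complexI R); rewrite -ncE normc_def /= expr0n addr0 sqrtr_sqr. Qed.

Lemma nc0 : nc 0 = 0. Proof. by apply/eqP; rewrite nc_eq0. Qed.
Lemma nc1 : nc 1 = 1. Proof. by rewrite -[1]/(1%:C) nc_real normr1. Qed.

Lemma ncV x : nc (x^-1) = (nc x)^-1.
Proof.
have [->|nz] := eqVneq x 0; first by rewrite invr0 nc0 invr0.
have nz' : nc x != 0 by rewrite nc_eq0.
by apply: (mulfI nz'); rewrite mulfV // -ncM mulfV // nc1.
Qed.

Lemma nc_sum (I : Type) (r : seq I) (P : pred I) (F : I -> C) :
  nc (\sum_(i <- r | P i) F i) <= \sum_(i <- r | P i) nc (F i).
Proof.
elim/big_rec2: _ => [|i y1 y2 _ IH]; first by rewrite nc0.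
apply: le_trans (ncD _ _) _; exact: lerD.
Qed.

Lemma ncBD x y : nc x - nc y <= nc (x - y).
Proof. have := ncD (x - y) y; rewrite subrK; lra. Qed.

Lemma sum_ge0 (I : Type) (r : seq I) (F : I -> R) :
  (forall i, 0 <= F i) -> 0 <= \sum_(i <- r) F i.
Proof. by move=> h; apply: sumr_ge0 => i _. Qed.
Definition psum (b : nat -> C) (y : C) (n : nat) : C := \sum_(m < n) b m * y ^+ m.
Definition apsum (b : nat -> C) (y : C) (n : nat) : R := \sum_(m < n) nc (b m) * nc y ^+ m.
Definition PC (b : nat -> C) (y s : C) :=
  (exists B : R, forall n, apsum b y n <= B) /\
  (forall e : R, 0 < e -> exists n0, forall n, (n0 <= n)%N -> nc (psum b y n - s) < e).
Definition mulpc (c : C) (b : nat -> C) : nat -> C :=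
  fun m => b m - (if m is m'.+1 then c * b m' else 0).

Lemma apsum_ge0 b y n : 0 <= apsum b y n.
Proof. by apply: sumr_ge0 => i _; rewrite mulr_ge0 ?exprn_ge0 ?nc_ge0. Qed.

Lemma apsumS b y n : apsum b y n.+1 = apsum b y n + nc (b n) * nc y ^+ n.
Proof. by rewrite /apsum big_ord_recr. Qed.

Lemma psumS b y n : psum b y n.+1 = psum b y n + b n * y ^+ n.
Proof. by rewrite /psum big_ord_recr. Qed.

Lemma apsum_mono b y n n' : (n <= n')%N -> apsum b y n <= apsum b y n'.
Proof.
move/subnK => <-; elim: (n' - n)%N => [|k IH] //=.
rewrite addSn apsumS; apply: le_trans IH _; rewrite lerDl.
by rewrite mulr_ge0 ?exprn_ge0 ?nc_ge0.
Qed.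

Lemma psum_mulpc c b y n :
  psum (mulpc c b) y n.+1 = psum b y n.+1 - c * y * psum b y n.
Proof.
rewrite /psum /mulpc; under eq_bigr do rewrite mulrBl; rewrite sumrB.
congr (_ - _); rewrite big_ord_recl /= mul0r add0r mulr_sumr.
by apply: eq_bigr => i _; rewrite exprS; ring.
Qed.

Lemma apsum_shift (g : nat -> R) (k : R) n :
  \sum_(m < n.+1) (if nat_of_ord m is m'.+1 then k * g m' else 0) = k * \sum_(m < n) g m.
Proof. by rewrite big_ord_recl /= add0r mulr_sumr. Qed.

Lemma apsum_mulpc_le c b y n :
  apsum (mulpc c b) y n.+1 <= apsum b y n.+1 + nc c * nc y * apsum b y n.
Proof.
rewrite /apsum.
have -> : nc c * nc y * \sum_(i < n) nc (b i) * nc y ^+ i =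
   \sum_(m < n.+1) (if nat_of_ord m is m'.+1 then nc c * nc y * (nc (b m') * nc y ^+ m') else 0).
  by rewrite apsum_shift.
rewrite -big_split /=; apply: ler_sum => i _; case: i => [[|m] hm] /=.
  by rewrite /mulpc subr0 addr0.
rewrite /mulpc exprS.
have -> : nc c * nc y * (nc (b m) * (nc y ^+ m)) = nc (c * b m) * (nc y * nc y ^+ m).
  by rewrite ncM; ring.
rewrite -mulrDl ler_wpM2r ?mulr_ge0 ?exprn_ge0 ?nc_ge0 //.
by apply: le_trans (ncD _ _) _; rewrite ncN.
Qed.

Lemma apsum_divpc_le c b y n :
  apsum b y n.+1 <= apsum (mulpc c b) y n.+1 + nc c * nc y * apsum b y n.
Proof.
rewrite /apsum.
have -> : nc c * nc y * \sum_(i < n) nc (b i) * nc y ^+ i =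
   \sum_(m < n.+1) (if nat_of_ord m is m'.+1 then nc c * nc y * (nc (b m') * nc y ^+ m') else 0).
  by rewrite apsum_shift.
rewrite -big_split /=; apply: ler_sum => i _; case: i => [[|m] hm] /=.
  by rewrite /mulpc subr0 addr0.
rewrite /mulpc exprS.
have -> : nc c * nc y * (nc (b m) * (nc y ^+ m)) = nc (c * b m) * (nc y * nc y ^+ m).
  by rewrite ncM; ring.
rewrite -mulrDl ler_wpM2r ?mulr_ge0 ?exprn_ge0 ?nc_ge0 //.
by apply: le_trans (ncD _ _); rewrite subrK.
Qed.

Lemma geo_small (t e : R) : 0 <= t -> t < 1 -> 0 < e ->
  exists n0, forall n, (n0 <= n)%N -> t ^+ n < e.
Proof.
move=> t0 t1 e0.
have [->|tn0] := eqVneq t 0.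
  by exists 1%N => -[|n] //= _; rewrite expr0n /=.
have tp : 0 < t by rewrite lt_def tn0.
set h := t^-1 - 1.
have hp : 0 < h by rewrite /h subr_gt0 invf_gt1.
have bern : forall n, 1 + n%:R * h <= (t^-1) ^+ n.
  elim=> [|n IH]; first by rewrite expr0 mul0r addr0.
  rewrite exprS; apply: le_trans (_ : (1 + h) * (1 + n%:R * h) <= _).
    rewrite -natr1.
    have := ler0n R n; move: (n%:R) => nn hn.
    nra.
  rewrite /h addrC subrK ler_wpM2l // invr_ge0 ltW //.
set M := Num.bound (e * h)^-1.
exists M => n hn.
have hM : (e * h)^-1 < M%:R by apply: archi_boundP; rewrite invr_ge0 mulr_ge0 ?ltW.
have hn' : (e * h)^-1 < n%:R by apply: lt_le_trans hM _; rewrite ler_nat.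
have ehp : 0 < e * h by rewrite mulr_gt0.
have inv1 : (e * h) * (e * h)^-1 = 1 by rewrite mulfV // gt_eqF.
have tu : t ^+ n * (t^-1) ^+ n = 1 by rewrite -exprMn mulfV ?gt_eqF // expr1n.
have := bern n; have := exprn_ge0 n (ltW tp).
have : 0 <= (t^-1)^+n by rewrite exprn_ge0 // invr_ge0 ltW.
move: (t ^+ n) ((t^-1) ^+ n) ((e * h)^-1) (n%:R) tu inv1 hn' ehp => a u i nn.
move=> h1 h2 h3 h4 h0 h5 h6.
have k1 : 1 < e * h * nn by nra.
have k2 : e * (nn * h) < e * u by rewrite ltr_pM2l //; lra.
have k0 : e * h * nn = e * (nn * h) by ring.
have k3 : 1 < e * u by lra.
rewrite ltNge; apply/negP => hae.
have : e * u <= a * u by rewrite ler_wpM2r //; lra.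
lra.
Qed.
Lemma PC_mul c b y s : PC b y s -> PC (mulpc c b) y ((1 - c * y) * s).
Proof.
move=> [[B hB] hc]; set K := nc c * nc y.
have K0 : 0 <= K by rewrite mulr_ge0 ?nc_ge0.
have B0 : 0 <= B by apply: le_trans (hB 0%N); apply: apsum_ge0.
split.
  exists (B + K * B) => -[|n].
    rewrite /apsum big_ord0; have : 0 <= K * B by rewrite mulr_ge0.
    lra.
  apply: le_trans (apsum_mulpc_le _ _ _ _) _; apply: lerD => //.
  by apply: ler_wpM2l (hB _).
move=> e e0.
have e10 : 0 < e / (1 + K) by rewrite divr_gt0 //; lra.
have [n0 hn0] := hc _ e10; exists n0.+1 => -[|n] // hn.
rewrite psum_mulpc.
have -> : psum b y n.+1 - c * y * psum b y n - (1 - c * y) * s =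
  (psum b y n.+1 - s) - c * y * (psum b y n - s) by ring.
apply: le_lt_trans (ncD _ _) _; rewrite ncN !ncM -/K.
have h1 := hn0 n.+1 (leqW hn).
have h2 := hn0 n hn.
have h3 : K * nc (psum b y n - s) <= K * (e / (1 + K)) by rewrite ler_wpM2l // ltW.
have h4 : e / (1 + K) + K * (e / (1 + K)) = e.
  by field; rewrite gt_eqF //; lra.
lra.
Qed.

Lemma absdiv c b u B : nc c * nc u < 1 ->
  (forall n, apsum (mulpc c b) u n <= B) ->
  forall n, apsum b u n <= B / (1 - nc c * nc u).
Proof.
move=> k1 hB n; set K := nc c * nc u.
have K0 : 0 <= K by rewrite mulr_ge0 ?nc_ge0.
have B0 : 0 <= B by apply: le_trans (hB 0%N); apply: apsum_ge0.
rewrite ler_pdivlMr; last by rewrite /K; lra.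
case: n => [|n]; first by rewrite /apsum big_ord0 mul0r.
have h1 := apsum_divpc_le c b u n.
have h2 := apsum_mono b u (leqnSn n).
have h3 := hB n.+1.
have : K * apsum b u n <= K * apsum b u n.+1 by rewrite ler_wpM2l.
rewrite -/K in h1 *; nra.
Qed.

Lemma PC_div c b y y' s : nc y < nc y' -> nc c * nc y' < 1 ->
  PC (mulpc c b) y s -> (exists B', forall n, apsum (mulpc c b) y' n <= B') ->
  PC b y (s / (1 - c * y)).
Proof.
move=> yy' cy' [[B hB] hc] [B' hB'].
have ky : nc c * nc y < 1.
  by apply: le_lt_trans cy'; rewrite ler_wpM2l ?nc_ge0 // ltW.
split; first by exists (B / (1 - nc c * nc y)); apply: absdiv.
move=> e e0; set K := nc c * nc y.
have K0 : 0 <= K by rewrite mulr_ge0 ?nc_ge0.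
set B1 := B' / (1 - nc c * nc y').
have hB1 := absdiv cy' hB'.
have B10 : 0 <= B1 by apply: le_trans (hB1 0%N); apply: apsum_ge0.
have y'0 : 0 < nc y' by apply: le_lt_trans yy'; apply: nc_ge0.
set th := nc y / nc y'.
have th0 : 0 <= th by rewrite divr_ge0 ?nc_ge0 // ltW.
have th1 : th < 1 by rewrite ltr_pdivrMr // mul1r.
have term : forall n, nc (b n * y ^+ n) <= B1 * th ^+ n.
  move=> n; rewrite ncM ncX.
  have -> : nc y = th * nc y' by rewrite /th mulfVK // gt_eqF.
  rewrite exprMn mulrCA mulrC ler_wpM2r ?exprn_ge0 //.
  apply: le_trans (hB1 n.+1); rewrite apsumS lerDr; exact: apsum_ge0.
set d := 1 - K.
have d0 : 0 < d by rewrite /d /K; lra.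
set e1 := e * d / 2.
have e10 : 0 < e1 by rewrite /e1 divr_gt0 ?mulr_gt0.
have [n1 hn1] := hc _ e10.
have e20 : 0 < e1 / (K * B1 + 1) by rewrite divr_gt0 //; nra.
have [n2 hn2] := geo_small th0 th1 e20.
exists (maxn n1 n2).+1 => -[|n] // hn.
have [hn1' hn2'] : (n1 <= n)%N /\ (n2 <= n)%N.
  by move: hn; rewrite ltnS geq_max => /andP[].
have cy1 : 1 - c * y != 0.
  rewrite subr_eq0; apply/eqP => h1.
  by move: ky; rewrite -ncM -h1 nc1 ltxx.
have -> : psum b y n.+1 - s / (1 - c * y) =
  ((psum (mulpc c b) y n.+1 - s) - c * y * (b n * y ^+ n)) / (1 - c * y).
  by rewrite psum_mulpc psumS; field.
rewrite ncM ncV.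
have nd : d <= nc (1 - c * y) by have := ncBD 1 (c * y); rewrite nc1 ncM.
have nd0 : 0 < nc (1 - c * y) by apply: lt_le_trans nd.
rewrite ltr_pdivrMr //.
apply: le_lt_trans (ncD _ _) _; rewrite ncN ncM [nc (c * y)]ncM -/K.
have h1 := hn1 n.+1 (leqW hn1').
have h2 := hn2 n hn2'.
have h3 := term n.
have h4 : K * nc (b n * y ^+ n) <= K * (B1 * th ^+ n) by rewrite ler_wpM2l.
have h5 : K * (B1 * th ^+ n) < e1.
  have h6 : (K * B1 + 1) * th ^+ n < e1.
    by rewrite -ltr_pdivlMl //; nra.
  have : 0 <= th ^+ n by rewrite exprn_ge0.
  nra.
have h7 : e * d <= e * nc (1 - c * y) by rewrite ler_wpM2l // ltW.
have h8 : e1 + e1 = e * d by rewrite /e1; field.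
lra.
Qed.

Lemma PC_shift0 b y : b 0%N = 0 -> y != 0 -> PC b y 0 -> PC (fun m => b m.+1) y 0.
Proof.
move=> b0 y0 [[B hB] hc].
have ey : forall n, psum b y n.+1 = y * psum (fun m => b m.+1) y n.
  move=> n; rewrite /psum big_ord_recl b0 mul0r add0r mulr_sumr.
  by apply: eq_bigr => i _; rewrite exprS /=; ring.
have ea : forall n, apsum b y n.+1 = nc y * apsum (fun m => b m.+1) y n.
  move=> n; rewrite /apsum big_ord_recl b0 nc0 mul0r add0r mulr_sumr.
  by apply: eq_bigr => i _; rewrite exprS /=; ring.
have ny : 0 < nc y by rewrite nc_gt0.
split.
  exists (B / nc y) => n; rewrite ler_pdivlMr // mulrC -ea; exact: hB.
move=> e e0; have [n0 hn0] := hc (e * nc y) (mulr_gt0 e0 ny).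
exists n0 => n hn; have := hn0 n.+1 (leqW hn).
by rewrite !subr0 ey ncM mulrC ltr_pM2r.
Qed.

Lemma PU0 b (r : R) : 0 < r -> (forall y, 0 < nc y -> nc y < r -> PC b y 0) -> b 0%N = 0.
Proof.
move=> r0 hP; apply/eqP; rewrite -nc_eq0; apply/negP => /negP hb.
set be := nc (b 0%N).
have be0 : 0 < be by rewrite lt_def hb nc_ge0.
set y0 : C := (r / 2)%:C.
have ny0 : nc y0 = r / 2 by rewrite /y0 nc_real ger0_norm // divr_ge0 // ltW.
have [[B0 hB0] _] : PC b y0 0.
  by apply: hP; rewrite ny0; [rewrite divr_gt0 | lra].
have B00 : 0 <= B0 by apply: le_trans (hB0 0%N); apply: apsum_ge0.
set t := be / (2 * B0 + 2 + be).
have den : 0 < 2 * B0 + 2 + be by lra.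
have t0 : 0 < t by rewrite divr_gt0.
have t1 : t < 1 by rewrite ltr_pdivrMr // mul1r; lra.
have tB : t * B0 < be / 2.
  rewrite /t mulrAC ltr_pdivrMr // mulrAC ltr_pdivlMr //; nra.
set y : C := (t * (r / 2))%:C.
have ny : nc y = t * (r / 2) by rewrite /y nc_real ger0_norm // mulr_ge0 ?divr_ge0 // ltW.
have [_ hc] : PC b y 0.
  apply: hP; rewrite ny; first by rewrite mulr_gt0 ?divr_gt0.
  have : r / 2 < r by lra.
  have : 0 < r / 2 by rewrite divr_gt0.
  nra.
have claim : forall n, nc (psum b y n.+1 - b 0%N) <= t * B0.
  move=> n; rewrite /psum big_ord_recl expr0 mulr1 addrC addKr.
  apply: le_trans; first exact: nc_sum.
  apply: le_trans (_ : t * \sum_(i < n) nc (b (bump 0 i)) * nc y0 ^+ (bump 0 i) <= _); last first.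
    rewrite ler_pM2l //; apply: (le_trans _ (hB0 n.+1)).
    by rewrite /apsum big_ord_recl lerDr mulr_ge0 ?exprn_ge0 ?nc_ge0.
  rewrite mulr_sumr; apply: ler_sum => i _; rewrite ncM ncX ny ny0 exprMn mulrCA.
  apply: ler_wpM2r; first by rewrite mulr_ge0 ?exprn_ge0 ?nc_ge0 ?divr_ge0 ?ltW.
  rewrite /bump /= exprS; apply: ler_piMr; first exact: ltW.
  by rewrite exprn_ile1 ?ltW.
have [n0 hn0] := hc (be / 2) (divr_gt0 be0 (ltr0n _ 2)).
have h1 := hn0 n0.+1 (leqnSn _); rewrite subr0 in h1.
have h2 := claim n0.
have h3 : be <= nc (psum b y n0.+1) + nc (psum b y n0.+1 - b 0%N).
  by have := ncD (psum b y n0.+1) (b 0%N - psum b y n0.+1); rewrite addrC subrK [nc (b 0%N - _)]ncB.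
lra.
Qed.

Lemma PU b (r : R) : 0 < r -> (forall y, 0 < nc y -> nc y < r -> PC b y 0) -> forall m, b m = 0.
Proof.
move=> r0 hP m; elim: m b hP => [|m IH] b hP; first exact: PU0 hP.
have b0 := PU0 r0 hP.
apply: (IH (fun m => b m.+1)) => y y0 yr.
by apply: PC_shift0 => //; [rewrite -nc_gt0 | apply: hP].
Qed.


Lemma symsumS (g : int -> C) N :
  symsum g N.+1 = symsum g N + g (N.+1%:Z) + g (- (N.+1%:Z)).
Proof.
rewrite /symsum.
have -> : (N.+1 + N.+1).+1 = ((N + N).+1).+2 by lia.
rewrite big_ord_recl big_ord_recr /= [RHS]addrC; congr (_ + (_ + _)).
- by congr g; lia.
- by apply: eq_bigr => i _; congr g; rewrite /bump /=; lia.
- by congr g; rewrite /bump /=; lia.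
Qed.

Lemma symsum_top (g : int -> C) (P N : nat) :
  (forall p : int, P%:Z < p -> g p = 0) -> (P <= N)%N ->
  symsum g N = \sum_(m < (N + P).+1) g (P%:Z - m%:Z).
Proof.
move=> hg /subnK <-; elim: (N - P)%N => [|k IH] /=.
  rewrite add0n /symsum (reindex_inj rev_ord_inj) /=.
  by apply: eq_bigr => i _; congr g; have := ltn_ord i; lia.
rewrite addSn symsumS IH hg; last by lia.
rewrite addr0 [in RHS]big_ord_recr /=; congr (_ + g _); lia.
Qed.

Lemma symsum_mono (g : int -> C) N N' : (forall p, 0 <= g p) -> (N <= N')%N ->
  symsum g N <= symsum g N'.
Proof.
move=> hg /subnK <-; elim: (N' - N)%N => [|k IH] //=.
rewrite addSn symsumS; apply: le_trans IH _.
by rewrite -addrA lerDl addr_ge0.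
Qed.

Lemma exprz_sub (x : C) (P m : nat) : x != 0 ->
  x ^ (P%:Z - m%:Z) = x ^+ P * (x^-1) ^+ m.
Proof.
move=> x0; rewrite expfzDr // -exprz_inv.
by [].
Qed.

Lemma real_posE (e : C) : 0 < e -> e = (complex.Re e)%:C /\ 0 < complex.Re e.
Proof.
move=> e0; have er : e \is Num.real by apply: gtr0_real.
split; first by rewrite RRe_real.
by move: e0; rewrite -(RRe_real er) ltcR.
Qed.

Section Transl.
Variables (a : int -> C) (P : nat) (x : C).
Hypothesis (ha : ub a P) (x0 : x != 0).
Let b := fun m : nat => a (P%:Z - m%:Z).
Let y := x^-1.

Lemma sym_psum N : (P <= N)%N ->
  symsum (fun p => a p * x ^ p) N = x ^+ P * psum b y (N + P).+1.
Proof.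
move=> hN; rewrite (@symsum_top _ P) //; last by move=> p hp; rewrite ha ?mul0r.
rewrite /psum mulr_sumr; apply: eq_bigr => i _; rewrite exprz_sub //.
by rewrite /b; ring.
Qed.

Lemma sym_apsum N : (P <= N)%N ->
  symsum (fun p => `|a p * x ^ p|) N = (nc x ^+ P * apsum b y (N + P).+1)%:C.
Proof.
move=> hN; rewrite (@symsum_top _ P) //; last by move=> p hp; rewrite ha ?mul0r ?normr0.
rewrite /apsum mulr_sumr rmorph_sum; apply: eq_bigr => i _; rewrite exprz_sub //.
by rewrite ncE !ncM !ncX /b; congr (_%:C); ring.
Qed.

Lemma ncxP : 0 < nc x ^+ P.
Proof. by rewrite exprn_gt0 // nc_gt0. Qed.

Lemma transl1 s : abs_conv_to a x s -> PC b y (s / x ^+ P).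
Proof.
move=> [[B hB] hc]; split.
  exists (complex.Re B / nc x ^+ P) => n.
  rewrite ler_pdivlMr ?ncxP //.
  have h1 := hB (n + P)%N; rewrite sym_apsum ?leq_addl // lecE /= in h1.
  case/andP: h1 => _ h1; apply: le_trans h1; rewrite mulrC; apply: ler_wpM2l; first exact: ltW ncxP.
  by apply: apsum_mono; lia.
move=> e e0.
have ep : 0 < (e * nc x ^+ P)%:C by rewrite ltcR mulr_gt0 ?ncxP.
have [n0 hn0] := hc _ ep.
exists (n0 + P + P).+1 => n hn.
have -> : n = ((n - P).-1 + P).+1 by lia.
have := hn0 (n - P).-1 ltac:(lia); rewrite sym_psum; last by lia.
rewrite ncE ltcR.
have -> : x ^+ P * psum b y ((n - P).-1 + P).+1 - s =
   x ^+ P * (psum b y ((n - P).-1 + P).+1 - s / x ^+ P).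
  by field; rewrite expf_neq0.
by rewrite ncM ncX mulrC ltr_pM2r ?ncxP.
Qed.

Lemma transl2 s : PC b y (s / x ^+ P) -> abs_conv_to a x s.
Proof.
move=> [[B hB] hc]; split.
  exists ((nc x ^+ P * B)%:C) => N.
  apply: le_trans (symsum_mono _ (leq_maxl N P)) _; first by move=> p; exact: normr_ge0.
  rewrite sym_apsum ?leq_maxr // lecR; apply: ler_wpM2l; first exact: ltW ncxP.
  exact: hB.
move=> e e0; have [-> er] := real_posE e0.
have ep : 0 < complex.Re e / nc x ^+ P by rewrite divr_gt0 ?ncxP.
have [n0 hn0] := hc _ ep.
exists (maxn P n0) => N hN.
rewrite sym_psum; last by apply: leq_trans hN; apply: leq_maxl.
have -> : x ^+ P * psum b y (N + P).+1 - s =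
   x ^+ P * (psum b y (N + P).+1 - s / x ^+ P).
  by field; rewrite expf_neq0.
rewrite ncE ltcR ncM ncX mulrC -ltr_pdivlMr ?ncxP //.
apply: hn0; apply: leq_trans (leq_maxr P n0) _; lia.
Qed.

End Transl.
Lemma conv_add (a1 a2 : int -> C) (x s1 s2 : C) : abs_conv_to a1 x s1 -> abs_conv_to a2 x s2 ->
  abs_conv_to (fun p => a1 p + a2 p) x (s1 + s2).
Proof.
move=> [[B1 hB1] hc1] [[B2 hB2] hc2]; split.
  exists (B1 + B2) => N; apply: le_trans (lerD (hB1 N) (hB2 N)).
  rewrite /symsum -big_split /=; apply: ler_sum => i _.
  by rewrite mulrDl ler_normD.
move=> e e0; have e2 : 0 < e / 2%:R by rewrite divr_gt0.
have [n1 h1] := hc1 _ e2; have [n2 h2] := hc2 _ e2.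
exists (maxn n1 n2) => N hN.
have [hn1 hn2] : (n1 <= N)%N /\ (n2 <= N)%N by move: hN; rewrite geq_max => /andP[].
have -> : @symsum R (fun p => (a1 p + a2 p) * x ^ p) N - (s1 + s2) =
  (symsum (fun p => a1 p * x ^ p) N - s1) + (symsum (fun p => a2 p * x ^ p) N - s2).
  by rewrite /symsum addrACA -opprD -big_split /=; congr (_ - _); apply: eq_bigr => i _; rewrite mulrDl.
apply: le_lt_trans (ler_normD _ _) _.
by rewrite [e]splitr ltrD ?h1 ?h2.
Qed.

Lemma conv_scale (k : C) (a : int -> C) (x s : C) : abs_conv_to a x s -> abs_conv_to (fun p => k * a p) x (k * s).
Proof.
move=> [[B hB] hc]; split.
  exists (`|k| * B) => N; apply: le_trans (ler_wpM2l (normr_ge0 k) (hB N)).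
  by rewrite /symsum mulr_sumr le_eqVlt; apply/orP; left; apply/eqP; apply: eq_bigr => i _; rewrite -mulrA normrM.
move=> e e0; have [->|k0] := eqVneq k 0.
  exists 0%N => N _; rewrite mul0r subr0 /symsum big1 ?normr0 // => i _; by rewrite !mul0r.
have ek : 0 < e / `|k| by rewrite divr_gt0 ?normr_gt0.
have [n0 h0] := hc _ ek; exists n0 => N hN.
have -> : @symsum R (fun p => k * a p * x ^ p) N - k * s = k * (symsum (fun p => a p * x ^ p) N - s).
  by rewrite mulrBr /symsum mulr_sumr; congr (_ - _); apply: eq_bigr => i _; rewrite mulrA.
by rewrite normrM mulrC -ltr_pdivlMr ?normr_gt0 // h0.
Qed.

Lemma conv_zero (x : C) : abs_conv_to (fun _ => 0) x 0.
Proof.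
split; first by exists 0 => N; rewrite /symsum big1 // => i _; rewrite mul0r normr0.
by move=> e e0; exists 0%N => N _; rewrite /symsum big1 ?subr0 ?normr0 // => i _; rewrite mul0r.
Qed.

Lemma conv_ext (a1 a2 : int -> C) (x s : C) : a1 =1 a2 -> abs_conv_to a1 x s -> abs_conv_to a2 x s.
Proof. by move=> /funext ->. Qed.

Lemma conv_shift (a : int -> C) P (x s : C) : ub a P -> x != 0 -> abs_conv_to a x s ->
  abs_conv_to (fun p => a (p - 1)) x (x * s).
Proof.
move=> ha x0 hc; apply: (@transl2 _ P.+1) => //.
  by move=> p hp; apply: ha; lia.
have := transl1 ha x0 hc.
have -> : x * s / x ^+ P.+1 = s / x ^+ P by rewrite exprS; field; rewrite expf_neq0.
have -> : (fun m : nat => a (P.+1%:Z - m%:Z - 1)) = (fun m : nat => a (P%:Z - m%:Z)).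
  by apply: funext => m; congr a; lia.
by [].
Qed.

Lemma conv_pmul (q : {poly C}) (a : int -> C) P (x s : C) : ub a P -> x != 0 -> abs_conv_to a x s ->
  abs_conv_to (pmul_ser q a) x (q.[x] * s).
Proof.
elim/poly_ind: q a P s => [|q c IH] a P s ha x0 hc.
  by rewrite horner0 mul0r; apply: conv_ext (conv_zero x) => p; rewrite pmul0.
have e : pmul_ser (q * 'X + c%:P) a =1 fun p => pmul_ser q (fun p => a (p - 1)) p + c * a p.
  move=> p; rewrite pmulD pmulMX pmulC; congr (_ + _).
  by apply: eq_bigr => i _; congr (_ * a _); lia.
apply: (@conv_ext (fun p => pmul_ser q (fun p => a (p - 1)) p + c * a p)); first by move=> p; rewrite e.
have -> : (q * 'X + c%:P).[x] * s = q.[x] * (x * s) + c * s.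
  by rewrite hornerD hornerMX hornerC mulrDl mulrA.
apply: conv_add; last exact: conv_scale.
apply: (IH _ P.+1) => //; first by move=> p hp; apply: ha; lia.
exact: conv_shift ha x0 hc.
Qed.
Lemma conv_div (c : C) (a : int -> C) P (rho : R) (S : C -> C) :
  ub a P -> 0 < rho -> nc c <= rho ->
  (forall x, rho < nc x -> abs_conv_to (pmul_ser ('X - c%:P) a) x (S x)) ->
  forall x, rho < nc x -> abs_conv_to a x (S x / (x - c)).
Proof.
move=> ha r0 hc hS x hx.
have x0 : x != 0 by rewrite -nc_gt0; apply: lt_trans hx.
set T := pmul_ser ('X - c%:P) a.
have hT : ub T P.+1.
  by move=> p hp; rewrite /T pmulXsubC !ha ?mulr0 ?subr0 //; lia.
set b := fun m : nat => a (P%:Z - m%:Z).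
have eT : (fun m : nat => T (P.+1%:Z - m%:Z)) = mulpc c b.
  apply: funext => m; rewrite /T pmulXsubC /mulpc /b; case: m => [|m] /=.
    rewrite [a (P.+1%:Z - 0%:Z)]ha ?mulr0; last by lia.
    by congr (a _ - _); lia.
  by congr (a _ - c * a _); lia.
set x' : C := ((nc x + rho) / 2)%:C.
have nx' : nc x' = (nc x + rho) / 2.
  by rewrite /x' nc_real ger0_norm // divr_ge0 // addr_ge0 ?nc_ge0 ?ltW.
have hx' : rho < nc x' by rewrite nx'; lra.
have x'0 : x' != 0 by rewrite -nc_gt0; apply: lt_trans hx'.
have h1 : PC (mulpc c b) (x^-1) (S x / x ^+ P.+1) by rewrite -eT; exact: (transl1 hT x0 (hS x hx)).
have h2 : PC (mulpc c b) (x'^-1) (S x' / x' ^+ P.+1) by rewrite -eT; exact: (transl1 hT x'0 (hS x' hx')).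
apply: (transl2 ha x0).
have xx' : nc x' < nc x by rewrite nx'; lra.
have h3 : nc (x^-1) < nc (x'^-1).
  rewrite !ncV ltf_pV2 ?posrE ?nc_gt0 //.
have h4 : nc c * nc (x'^-1) < 1.
  by rewrite ncV ltr_pdivrMr ?nc_gt0 // mul1r; apply: le_lt_trans hc hx'.
have := PC_div h3 h4 h1 (proj1 h2).
have xc : x - c != 0.
  rewrite subr_eq0; apply/eqP => e; move: hx; rewrite e; move: hc; rewrite /=; lra.
have -> : S x / x ^+ P.+1 / (1 - c * x^-1) = S x / (x - c) / x ^+ P.
  have -> : 1 - c * x^-1 = (x - c) / x by field.
  by rewrite exprS; field; rewrite xc x0 expf_neq0.
by [].
Qed.

Lemma conv_divpow (c : C) n (a : int -> C) P (rho : R) (S : C -> C) :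
  ub a P -> 0 < rho -> nc c <= rho ->
  (forall x, rho < nc x -> abs_conv_to (pmul_ser (('X - c%:P) ^+ n) a) x (S x)) ->
  forall x, rho < nc x -> abs_conv_to a x (S x / (x - c) ^+ n).
Proof.
elim: n a P S => [|n IH] a P S ha r0 hc hS x hx.
  rewrite expr0 divr1; apply: conv_ext (hS x hx) => p.
  by rewrite expr0 -polyC1 pmulC mul1r.
have ha' : ub (pmul_ser ('X - c%:P) a) (P + size ('X - c%:P)) by apply: ub_pmul.
have hI' : forall x, rho < nc x -> abs_conv_to (pmul_ser ('X - c%:P) a) x (S x / (x - c) ^+ n).
  move=> x1 hx1; apply: (IH (pmul_ser ('X - c%:P) a) (P + size ('X - c%:P)) S) => // x2 hx2.
  apply: conv_ext (hS x2 hx2) => p; by rewrite exprSr pmul_mul.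
have := conv_div ha r0 hc hI' hx.
by rewrite exprSr invfM mulrA.
Qed.

Lemma conv_uniq (d : int -> C) P (rho : R) : ub d P -> 0 < rho ->
  (forall x, rho < nc x -> abs_conv_to d x 0) -> forall p, d p = 0.
Proof.
move=> hd r0 hc.
have hb : forall m, (fun m : nat => d (P%:Z - m%:Z)) m = 0.
  apply: (@PU _ rho^-1); first by rewrite invr_gt0.
  move=> y y0 yr.
  have y0' : y != 0 by rewrite -nc_gt0.
  have hx : rho < nc (y^-1).
    by rewrite ncV -[rho]invrK ltf_pV2 ?posrE ?invr_gt0.
  have := transl1 hd (x := y^-1) _ (hc _ hx).
  by rewrite invrK mul0r; apply; rewrite invr_eq0.
move=> p; have [hp|hp] := ltP P%:Z p; first exact: hd.
have := hb `|P%:Z - p|%N; rewrite /=.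
have -> : P%:Z - (`|P%:Z - p|%N)%:Z = p by lia.
by [].
Qed.

Definition dlt (p : int) : C := if p == 0 then 1 else 0.

Lemma conv_dlt (x : C) : x != 0 -> abs_conv_to dlt x 1.
Proof.
move=> x0; apply: (@transl2 _ 0%N) => //.
  move=> p hp; rewrite /dlt; case: eqP => // h; lia.
rewrite expr0 divr1; split.
  exists 1 => -[|n]; first by rewrite /apsum big_ord0.
  rewrite /apsum big_ord_recl big1; last first.
    move=> i _; rewrite /dlt; case: eqP => [h|_]; last by rewrite nc0 mul0r.
    by exfalso; move: h; rewrite lift0; lia.
  rewrite addr0 /dlt; case: eqP => [_|h]; first by rewrite nc1 mul1r expr0.
  by exfalso; apply: h; rewrite /=; lia.
move=> e e0; exists 1%N => -[|n] // _.
rewrite /psum big_ord_recl big1; last first.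
  move=> i _; rewrite /dlt; case: eqP => [h|_]; last by rewrite mul0r.
  by exfalso; move: h; rewrite lift0; lia.
rewrite addr0 /dlt; case: eqP => [_|h]; first by rewrite mul1r expr0 subrr nc0.
by exfalso; apply: h; rewrite /=; lia.
Qed.

Lemma pmul_dlt (g : {poly C}) p : pmul_ser g dlt p = if 0 <= p then g`_`|p|%N else 0.
Proof.
rewrite /pmul_ser.
rewrite (eq_bigr (fun i : 'I_(size g) => if (nat_of_ord i == `|p|%N) && (0 <= p) then g`_i else 0)); last first.
  move=> i _; move: (nat_of_ord i) => k; rewrite /dlt; case: eqP => h.
    rewrite mulr1.
    have h1 : (k == `|p|%N) && (0 <= p) by apply/andP; split; [apply/eqP; lia | lia].
    by rewrite h1.
  rewrite mulr0.
  have h1 : ((k == `|p|%N) && (0 <= p)) = false.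
    by apply/negbTE/negP => /andP[/eqP h1 h2]; apply: h; lia.
  by rewrite h1.
rewrite -big_mkcond /=.
case: (leP 0 p) => hp; last by rewrite big_pred0 // => i; rewrite andbF.
have [hs|hs] := ltnP `|p|%N (size g).
  rewrite (big_pred1 (Ordinal hs)) //= => i; rewrite andbT.
  by apply/eqP/eqP => [h|-> //]; apply: val_inj.
rewrite big_pred0 ?nth_default // => i; rewrite andbT; apply/negP => /eqP h.
by have := ltn_ord i; rewrite h ltnNge hs.
Qed.

Lemma poly_inf_roots (q : {poly C}) (rho : R) :
  (forall x, rho < nc x -> q.[x] = 0) -> q = 0.
Proof.
move=> hq; apply/eqP; apply: contraT => nq.
set rs := [seq ((`|rho| + 1 + i%:R)%:C : C) | i <- iota 0 (size q)].
have := max_poly_roots nq _ _.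
move=> /(_ rs); rewrite size_map size_iota ltnn; apply.
  apply/allP => x /mapP [i _ ->]; apply/rootP; apply: hq.
  rewrite nc_real ger0_norm; last by rewrite addr_ge0 ?ler0n // addr_ge0.
  have := ler_norm rho; have := ler0n R i; lra.
rewrite map_inj_uniq ?iota_uniq // => i j /(@complexI R) /addrI /eqP.
by rewrite eqr_nat => /eqP.
Qed.
Lemma self_add0 (N : zmodType) (x : N) : x + x = x -> x = 0.
Proof. by move/(congr1 (fun y => y - x)); rewrite addrK subrr. Qed.

Section VOAfacts.
Variables (V : lmodType C) (M : lmodType C) (Y : vop V M).
Hypothesis bil : bilinear_vop Y.

Lemma Y_addr u n w1 w2 : Y u n (w1 + w2) = Y u n w1 + Y u n w2.
Proof. by have [_ h] := bil n; rewrite -[w1]scale1r h !scale1r. Qed.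

Lemma Y_0r u n : Y u n 0 = 0.
Proof. by have := Y_addr u n 0 0; rewrite addr0 => /esym; apply: self_add0. Qed.

Lemma Y_scaler u n a w : Y u n (a *: w) = a *: Y u n w.
Proof. by have [_ h] := bil n; rewrite -[a *: w]addr0 h Y_0r addr0. Qed.

Lemma Y_0l n w : Y 0 n w = 0.
Proof.
have [h _] := bil n; have := h 1 0 0 w; rewrite !scale1r addr0.
by move/esym; apply: self_add0.
Qed.

Lemma Y_sum u n (I : Type) (r : seq I) (F : I -> M) :
  Y u n (\sum_(i <- r) F i) = \sum_(i <- r) Y u n (F i).
Proof. by apply: (big_morph _ (Y_addr u n) (Y_0r u n)). Qed.

End VOAfacts.

Lemma fsumT_seq (N : nmodType) (T : choiceType) (r : seq T) (f : T -> N) :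
  uniq r -> (forall i, i \notin r -> f i = 0) ->
  \sum_(i \in [set: T]) f i = \sum_(i <- r) f i.
Proof.
move=> ur fr; rewrite (fsbigE r) //; last by move=> i _; apply: fr.
by apply: eq_bigl => i; rewrite in_setT.
Qed.

Definition rg (N : nat) : seq int := [seq (i%:Z - N%:Z) | i <- iota 0 (N + N).+1].

Lemma rg_uniq N : uniq (rg N).
Proof. by rewrite map_inj_uniq ?iota_uniq // => i j /addIr []. Qed.

Lemma rg_out N (n : int) : n \notin rg N -> (N < `|n|)%N.
Proof.
apply: contraR; rewrite -leqNgt => hn; apply/mapP.
exists (absz (n + N%:Z)); last by lia.
by rewrite mem_iota; lia.
Qed.

Section Grading.
Variables (V : lmodType C) (Y : vop V V) (om : V) (pi : int -> V -> V).
Hypothesis gr : is_grading (Y om 1) pi.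
Hypothesis bil : bilinear_vop Y.

Lemma pi_add n v1 v2 : pi n (v1 + v2) = pi n v1 + pi n v2.
Proof. by case: gr => h _ _ _; rewrite -[v1]scale1r h !scale1r. Qed.
Lemma pi_0 n : pi n 0 = 0.
Proof. by have := pi_add n 0 0; rewrite addr0 => /esym; apply: self_add0. Qed.
Lemma pi_scale n a v : pi n (a *: v) = a *: pi n v.
Proof. by case: gr => h _ _ _; rewrite -[a *: v]addr0 h pi_0 addr0. Qed.
Lemma pi_sum n (I : Type) (r : seq I) (F : I -> V) :
  pi n (\sum_(i <- r) F i) = \sum_(i <- r) pi n (F i).
Proof. exact: (big_morph _ (pi_add n) (pi_0 n)). Qed.

Lemma pi_idem m n v : pi m (pi n v) = if m == n then pi n v else 0.
Proof. by case: gr => _ h _ _. Qed.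

Lemma pi_L0 n v : Y om 1 (pi n v) = n%:~R *: pi n v.
Proof. by case: gr => _ _ _ h. Qed.

Lemma pi_decomp v : exists N : nat, (forall n, n \notin rg N -> pi n v = 0)
  /\ v = \sum_(n <- rg N) pi n v.
Proof.
case: gr => _ _ h _; have [N [h1 h2]] := h v.
have hN : forall n, n \notin rg N -> pi n v = 0 by move=> n /rg_out; exact: h1.
exists N; split => //; rewrite {1}h2; exact: fsumT_seq (rg_uniq N) hN.
Qed.

Lemma pi_L0_comm m y : pi m (Y om 1 y) = m%:~R *: pi m y.
Proof.
have [N [hN ey]] := pi_decomp y.
set r := undup (m :: rg N).
have ur : uniq r by apply: undup_uniq.
have hr : forall n, n \notin r -> pi n y = 0.
  by move=> n; rewrite mem_undup in_cons negb_or => /andP[_]; exact: hN.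
have ey' : y = \sum_(n <- r) pi n y.
  case: gr => _ _ h _; have [N' [h1 h2]] := h y.
  by rewrite {1}h2; apply: fsumT_seq.
rewrite {1}ey' Y_sum // pi_sum (bigD1_seq m) ?mem_undup ?mem_head //=.
rewrite big1_seq ?addr0.
  by rewrite pi_L0 pi_scale pi_idem eqxx.
move=> n /andP[nm _]; rewrite pi_L0 pi_scale pi_idem eq_sym (negbTE nm).
by rewrite scaler0.
Qed.

End Grading.

Lemma L1_lower (V : lmodType C) (Y : vop V V) (vac om : V) (pi : int -> V -> V)
  n u : is_VOA Y vac om pi ->
  Y om 2 (pi n u) = pi (n - 1) (Y om 2 (pi n u)).
Proof.
case=> [[bil _] _ _ [[c vir] _] [[gr _] _ _]].
set x := Y om 2 (pi n u).
have hL0 : Y om 1 x = (n - 1)%:~R *: x.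
  have := vir 0 1 (pi n u); rewrite !add0r /=.
  have -> : (1 + 1 : int) = 2 by [].
  rewrite scale0r addr0 (pi_L0 gr) (Y_scaler bil) -/x.
  move/(canRL (subrK _)) => ->.
  by rewrite -scalerDl addrC; congr (_ *: _); rewrite rmorphB /=.
have hm : forall m, m != n - 1 -> pi m x = 0.
  move=> m mn; have := pi_L0_comm gr bil m x; rewrite hL0 (pi_scale gr).
  move/eqP; rewrite -subr_eq0 -scalerBl scaler_eq0 => /orP[|/eqP //].
  rewrite -rmorphB intr_eq0 subr_eq0 => /eqP e.
  by move: mn; rewrite e eqxx.
have [N [hN ex]] := pi_decomp gr x.
case: gr => _ _ h _; have [N' [h1 h2]] := h x.
rewrite {1}h2 (@fsumT_seq _ _ [:: n - 1]) ?big_seq1 //.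
by move=> i; rewrite mem_seq1 => /hm.
Qed.
Lemma unif (Q : nat -> int -> Prop) m :
  (forall i, (i < m)%N -> exists B : int, forall k, k <= B -> Q i k) ->
  exists B : int, forall i, (i < m)%N -> forall k, k <= B -> Q i k.
Proof.
elim: m => [|m IH] h; first by exists 0.
have [B1 h1] := IH (fun i hi => h i (ltnW hi)).
have [B2 h2] := h m (ltnSn m).
exists (Num.min B1 B2) => i hi k hk.
move: hk; rewrite le_min => /andP[k1 k2].
move: hi; rewrite ltnS leq_eqVlt => /orP[/eqP ->|hi]; first exact: h2.
exact: h1.
Qed.

Lemma iter_0 (V : lmodType C) (Y : vop V V) (om : V) j : bilinear_vop Y ->
  iter j (Y om 2) 0 = 0.
Proof. by move=> bil; elim: j => [|j IH] //=; rewrite IH (Y_0r bil). Qed.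

Lemma iter_L1 (V : lmodType C) (Y : vop V V) (vac om : V) (pi : int -> V -> V)
  j n u : is_VOA Y vac om pi ->
  iter j (Y om 2) (pi n u) = pi (n - j%:Z) (iter j (Y om 2) (pi n u)).
Proof.
move=> hV; have hV' := hV; case: hV' => [[bil _] _ _ _ [[gr _] _ _]].
elim: j => [|j IH] /=; first by rewrite subr0 (pi_idem gr) eqxx.
rewrite IH {1}(L1_lower _ _ hV); congr (pi _ _); lia.
Qed.

Lemma Yo_trunc (V : lmodType C) (Y : vop V V) (vac om : V) (pi : int -> V -> V)
  (W : lmodType C) (YW : vop V W) :
  is_VOA Y vac om pi -> is_weak_module Y vac YW ->
  forall v w, exists K0 : int, forall k : int, k <= K0 -> Yo_coef Y om pi YW v k w = 0.
Proof.
move=> hV hW v w.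
have hV' := hV; case: hV' => [[bil _] _ _ _ [[gr _] _ [N0 hN0]]].
case: hW => bilW truncW _ _.
have [N [hN ev]] := pi_decomp gr v.
set J := (`|N%:Z - N0|%N).+1.
have tz_n : forall n j k, n \notin rg N ->
    ((-1) ^ n / (j`!)%:R) *: YW (iter j (Y om 2) (pi n v)) (2 * n - k - 2 - j%:Z) w = 0.
  by move=> n j k /hN ->; rewrite iter_0 // Y_0l // scaler0.
have tz_j : forall n j k, n \in rg N -> (J <= j)%N ->
    ((-1) ^ n / (j`!)%:R) *: YW (iter j (Y om 2) (pi n v)) (2 * n - k - 2 - j%:Z) w = 0.
  move=> n j k hn hj; have [i hi en] : exists2 i, i \in iota 0 (N + N).+1 & n = i%:Z - N%:Z by apply/(@mapP _ _ (fun i : nat => i%:Z - N%:Z)).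
  rewrite en; move: hi; rewrite mem_iota => hi.
  rewrite (iter_L1 _ _ _ hV) hN0 ?iter_0 ?Y_0l ?scaler0 //.
  rewrite /J in hj; lia.
have [B1 hB1] : exists B : int, forall i, (i < (N + N).+1)%N -> forall k, k <= B ->
    forall j, (j < J)%N ->
    ((-1) ^ (i%:Z - N%:Z) / (j`!)%:R) *: YW (iter j (Y om 2) (pi (i%:Z - N%:Z) v))
       (2 * (i%:Z - N%:Z) - k - 2 - j%:Z) w = 0.
  apply: unif => i hi.
  have hJ : forall j, (j < J)%N -> exists B : int, forall k, k <= B ->
      ((-1) ^ (i%:Z - N%:Z) / (j`!)%:R) *:
      YW (iter j (Y om 2) (pi (i%:Z - N%:Z) v)) (2 * (i%:Z - N%:Z) - k - 2 - j%:Z) w = 0.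
    move=> j _; have [M hM] := truncW (iter j (Y om 2) (pi (i%:Z - N%:Z) v)) w.
    exists (2 * (i%:Z - N%:Z) - 2 - j%:Z - M) => k hk.
    by rewrite hM ?scaler0 //; lia.
  have [B hB] := unif hJ.
  by exists B => k hk j hj; apply: hB.
exists B1 => k hk.
rewrite /Yo_coef fsbig1 // => n _; rewrite fsbig1 // => j _.
case: (boolP (n \in rg N)) => hn; last exact: tz_n.
case: (ltnP j J) => hj; last exact: tz_j.
have [i hi en] : exists2 i, i \in iota 0 (N + N).+1 & n = i%:Z - N%:Z by apply/(@mapP _ _ (fun i : nat => i%:Z - N%:Z)).
rewrite en; move: hi; rewrite mem_iota => hi.
exact: hB1.
Qed.
End An.
Section Main.
Variable R : realType.
Local Notation C := R[i].
Variables (V : lmodType C) (Y : vop V V) (vac om : V) (pi : int -> V -> V)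
  (W : lmodType C) (YW : vop V W) (z : C) (alpha : W -> C).
Hypotheses (hV : is_VOA Y vac om pi) (hW : is_weak_module Y vac YW) (z0 : z != 0)
  (hal : lin_functional alpha).

Local Notation a v w := (Yo_pair Y om pi YW alpha v w).

Lemma alpha0 : alpha 0 = 0.
Proof.
have := hal 1 0 0; rewrite scale1r addr0 mul1r => h.
by apply: self_add0; rewrite -h.
Qed.

Lemma ubY v w : exists P, ub (a v w) P.
Proof.
have [K0 hK] := Yo_trunc hV hW v w.
exists (absz (K0 + 1)) => p hp; rewrite /Yo_pair hK ?alpha0 //; lia.
Qed.

Lemma dser_ser q v p w : pmul_dser q (Ystar Y om pi YW v alpha) p w = pmul_ser q (a v w) p.
Proof. by []. Qed.

Lemma rho0 : 0 < nc z. Proof. by rewrite nc_gt0. Qed.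

Lemma nc_lt (x y : C) : (`|x| < `|y|) = (nc x < nc y).
Proof. by rewrite !ncE ltcR. Qed.

Lemma pmulXl l (q : {poly C}) (f : int -> C) p : pmul_ser ('X ^+ l * q) f p = pmul_ser q f (p - l%:Z).
Proof. by rewrite pmul_mul pmulXn. Qed.

Lemma DbDc :
  (forall v : V, exists l k : nat, forall w : W,
      exists r : {poly C}, forall p : int,
        pmul_ser ('X ^+ l * ('X - z%:P) ^+ k) (a v w) p
        = if 0 <= p then r`_(`|p|%N) else 0) <->
  (forall v : V, exists l k : nat, forall p : int, p < 0 ->
        pmul_dser ('X ^+ l * ('X - z%:P) ^+ k) (Ystar Y om pi YW v alpha) p
        = (fun _ => 0)).
Proof.
split.
  move=> hb v; have [l [k h]] := hb v; exists l, k => p hp.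
  apply: funext => w; have [r hr] := h w.
  by rewrite dser_ser hr ifF //; apply/negbTE; rewrite -ltNge.
move=> hc v; have [l [k h]] := hc v; exists l, k => w.
set Q := 'X ^+ l * ('X - z%:P) ^+ k.
have [P hP] := ubY v w.
have hQ := ub_pmul (q := Q) hP.
exists (\poly_(i < (P + size Q).+1) pmul_ser Q (a v w) i%:Z) => p.
rewrite coef_poly; case: (leP 0 p) => hp.
  case: ltnP => hs; first by congr pmul_ser; lia.
  by apply: hQ; move: hs hp; move: (P + size Q)%N => m; lia.
by have := congr1 (fun F => F w) (h p hp); rewrite dser_ser.
Qed.

Lemma DcDd :
  (forall v : V, exists l k : nat, forall p : int, p < 0 ->
        pmul_dser ('X ^+ l * ('X - z%:P) ^+ k) (Ystar Y om pi YW v alpha) p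
        = (fun _ => 0)) <->
  (forall v : V, exists k : nat, exists N : int, forall p : int, p < N ->
        pmul_dser (('X - z%:P) ^+ k) (Ystar Y om pi YW v alpha) p
        = (fun _ => 0)).
Proof.
split.
  move=> hc v; have [l [k h]] := hc v; exists k, (- l%:Z) => p hp.
  apply: funext => w; have := congr1 (fun F => F w) (h (p + l%:Z) ltac:(lia)).
  by rewrite !dser_ser pmulXl addrK.
move=> hd v; have [k [N h]] := hd v; exists (absz N), k => p hp.
apply: funext => w; rewrite dser_ser pmulXl.
by have := congr1 (fun F => F w) (h (p - (absz N)%:Z) ltac:(lia)); rewrite dser_ser.
Qed.

Lemma poly_div_case (L K b1 a2 : nat) (q1 q2 : {poly C}) (f : C -> C) :
  (forall x, x != 0 -> x != z -> f x = q1.[x] / (x ^+ L * (x - z) ^+ b1)) ->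
  (forall x, x != 0 -> x != z -> f x = q2.[x] / (x ^+ a2 * (x - z) ^+ K)) ->
  exists g : {poly C}, forall x, x != 0 -> x != z -> f x = g.[x] / (x ^+ L * (x - z) ^+ K).
Proof.
move=> e1 e2.
have nzx : forall x, x != 0 -> x != z -> forall n m, x ^+ n * (x - z) ^+ m != 0.
  by move=> x x0 xz n m; rewrite mulf_neq0 ?expf_neq0 ?subr_eq0.
have [hb|hb] := leqP b1 K.
  exists (q1 * ('X - z%:P) ^+ (K - b1)) => x x0 xz.
  rewrite e1 // hornerM horner_exp hornerXsubC.
  have -> : (x - z) ^+ K = (x - z) ^+ (K - b1) * (x - z) ^+ b1 by rewrite -exprD subnK.
  have xz' : x - z != 0 by rewrite subr_eq0.
  by field; rewrite !expf_neq0.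
set e := (b1 - K)%N.
have hPP : q1 * 'X ^+ a2 * ('X - z%:P) ^+ K - q2 * 'X ^+ L * ('X - z%:P) ^+ b1 = 0.
  apply: (@poly_inf_roots _ _ (nc z)) => x hx.
  have x0 : x != 0 by rewrite -nc_gt0; apply: le_lt_trans hx; apply: nc_ge0.
  have xz : x != z by apply/eqP => e0; move: hx; rewrite e0 ltxx.
  have hq1 : q1.[x] = f x * (x ^+ L * (x - z) ^+ b1) by rewrite e1 // divfK ?nzx.
  have hq2 : q2.[x] = f x * (x ^+ a2 * (x - z) ^+ K) by rewrite e2 // divfK ?nzx.
  rewrite !(hornerE, hornerXn, hornerXsubC) hq1 hq2; ring.
have hb' : b1 = (K + e)%N by rewrite /e; lia.
move: hPP; rewrite hb' exprD => /eqP; rewrite subr_eq0 => /eqP hPP.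
have hXz : ('X - z%:P) ^+ K != 0 :> {poly C} by rewrite expf_neq0 // polyXsubC_eq0.
have hPP' : q1 * 'X ^+ a2 = q2 * 'X ^+ L * ('X - z%:P) ^+ e.
  apply: (mulIf hXz); rewrite hPP; ring.
have hdvd : ('X - z%:P) ^+ e %| q1.
  have cop : coprimep (('X - z%:P) ^+ e) ('X ^+ a2).
    apply: coprimep_expl; apply: coprimep_expr; rewrite coprimep_sym coprimep_XsubC.
    by rewrite rootX.
  by rewrite -(Gauss_dvdpl _ cop) hPP' dvdp_mull.
exists (q1 %/ ('X - z%:P) ^+ e) => x x0 xz.
rewrite e1 // -{1}(divpK hdvd) hornerM horner_exp hornerXsubC hb' exprD.
have xz' : x - z != 0 by rewrite subr_eq0.
by field; rewrite !expf_neq0.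
Qed.

Lemma DaDb :
  Pz_linear Y om pi YW z alpha <->
  (forall v : V, exists l k : nat, forall w : W,
      exists r : {poly C}, forall p : int,
        pmul_ser ('X ^+ l * ('X - z%:P) ^+ k) (a v w) p
        = if 0 <= p then r`_(`|p|%N) else 0).
Proof.
have r0 := rho0.
split.
  move=> ha v; have [L [K h]] := ha v; exists L, K => w.
  have [f [hconv [_ [[q1 [b1 e1]] [q2 [a2 e2]]]]]] := h w.
  have [g hg] := poly_div_case e1 e2.
  set Q := 'X ^+ L * ('X - z%:P) ^+ K.
  have [P hP] := ubY v w.
  have hc : forall x, nc z < nc x -> abs_conv_to (pmul_ser Q (a v w)) x g.[x].
    move=> x hx.
    have x0 : x != 0 by rewrite -nc_gt0; apply: le_lt_trans hx; apply: nc_ge0.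
    have xz : x != z by apply/eqP => e0; move: hx; rewrite e0 ltxx.
    have := conv_pmul Q hP x0 (hconv x ltac:(by rewrite nc_lt)).
    suff -> : Q.[x] * f x = g.[x] by [].
    rewrite hg // /Q hornerM hornerXn horner_exp hornerXsubC.
    have xz' : x - z != 0 by rewrite subr_eq0.
    by field; rewrite !expf_neq0.
  have hd : forall x, nc z < nc x -> abs_conv_to
      (fun p => pmul_ser Q (a v w) p + (-1) * pmul_ser g (@dlt R) p) x (g.[x] + (-1) * (g.[x] * 1)).
    move=> x hx.
    have x0 : x != 0 by rewrite -nc_gt0; apply: le_lt_trans hx; apply: nc_ge0.
    apply: conv_add; first exact: hc.
    apply: conv_scale; apply: (@conv_pmul _ g (@dlt R) 0%N) => //; last exact: conv_dlt.
    by move=> p hp; rewrite /dlt; case: eqP => // hh; lia.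
  have hub : ub (fun p => pmul_ser Q (a v w) p + (-1) * pmul_ser g (@dlt R) p) (P + size Q + size g).
    move=> p hp; rewrite (ub_pmul (q := Q) hP) ?add0r; last by move: hp; move: (P + size Q)%N (size g) => m1 m2; lia.
    rewrite (@ub_pmul _ g (@dlt R) 0%N) ?mulr0 //; last by move: hp; move: (P + size Q)%N (size g) => m1 m2; lia.
    by move=> p' hp'; rewrite /dlt; case: eqP => // hh; lia.
  have hu : forall p, pmul_ser Q (a v w) p + (-1) * pmul_ser g (@dlt R) p = 0.
    apply: (conv_uniq hub r0) => x hx.
    by have := hd x hx; rewrite mulr1 mulN1r subrr.
  exists g => p; rewrite -pmul_dlt.
  by have := hu p; rewrite mulN1r; apply: subr0_eq.
move=> hb v; have [l [k h]] := hb v; exists l, k => w.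
have [r hr] := h w.
exists (fun x => r.[x] / (x ^+ l * (x - z) ^+ k)); split; last first.
  split; first by exists r, l, k.
  by split; [exists r, k | exists r, l].
move=> x; rewrite nc_lt => hx.
have [P hP] := ubY v w.
set a1 := pmul_ser (('X - z%:P) ^+ k) (a v w).
have ha1 : ub a1 (P + size (('X - z%:P) ^+ k)) by apply: ub_pmul.
have s1 : forall x, nc z < nc x -> abs_conv_to a1 x (r.[x] / (x - 0) ^+ l).
  have c0 : nc 0 <= nc z by rewrite nc0 ltW.
  apply: (@conv_divpow _ 0 l a1 _ (nc z) (fun x => r.[x]) ha1 r0 c0).
  move=> x1 hx1.
  have x10 : x1 != 0 by rewrite -nc_gt0; apply: le_lt_trans hx1; apply: nc_ge0.
  apply: (@conv_ext _ (pmul_ser r (@dlt R))); last first.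
    have := @conv_pmul _ r (@dlt R) 0%N x1 1 _ x10 (conv_dlt x10); rewrite mulr1; apply.
    by move=> p hp; rewrite /dlt; case: eqP => // hh; lia.
  move=> p; rewrite pmul_dlt -hr /a1 -pmul_mul subr0; done.
have := @conv_divpow _ z k _ _ (nc z) (fun x => r.[x] / (x - 0) ^+ l) hP r0 (lexx _) s1 x hx.
by rewrite subr0 invfM mulrA.
Qed.

End Main.

Theorem lemma3p4 (R : realType) (V : lmodType R[i]) (Y : vop V V) (vac om : V)
    (pi : int -> V -> V) (W : lmodType R[i]) (YW : vop V W)
    (z : R[i]) (alpha : W -> R[i]) :
  is_VOA Y vac om pi ->
  is_weak_module Y vac YW ->
  z != 0 ->
  lin_functional alpha ->
  let Da := Pz_linear Y om pi YW z alpha in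
  let Db := forall v : V, exists l k : nat, forall w : W,
      exists r : {poly R[i]}, forall p : int,
        pmul_ser ('X ^+ l * ('X - z%:P) ^+ k) (Yo_pair Y om pi YW alpha v w) p
        = if 0 <= p then r`_(`|p|%N) else 0 in
  let Dc := forall v : V, exists l k : nat, forall p : int, p < 0 ->
        pmul_dser ('X ^+ l * ('X - z%:P) ^+ k) (Ystar Y om pi YW v alpha) p
        = (fun _ => 0) in
  let Dd := forall v : V, exists k : nat, exists N : int, forall p : int, p < N ->
        pmul_dser (('X - z%:P) ^+ k) (Ystar Y om pi YW v alpha) p
        = (fun _ => 0) in
  (Da <-> Db) /\ (Da <-> Dc) /\ (Da <-> Dd).
Proof.
move=> hV hW z0 hal Da Db Dc Dd.
have ab : Da <-> Db := DaDb hV hW z0 hal.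
have bc : Db <-> Dc := DbDc hV hW z0 hal.
have cd : Dc <-> Dd := DcDd Y om pi YW alpha z0.
split; first exact: ab.
split; first by split => h; [apply/bc/ab | apply/ab/bc].
by split => h; [apply/cd/bc/ab | apply/ab/bc/cd].
Qed.
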